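(* Let $X$ be a locally compact metric space and $\Gamma$ a pseudo*group of local homeomorphisms of $X$ which is minimal and equicontinuous. Let $X_0$ be a relatively compact open subset of $X$, and fix $\chi\in C_c(X)_{>0}$ with $\chi=1$ on $X_0$. For $\zeta\in C_c(X)_{\ge0}$ and $\psi\in C_c(X)_{>0}$ set $$(\zeta:\psi)=\inf\Big\{\sum_{i=1}^n c_i \;\Big|\; \zeta\le\sum_{i=1}^n c_i\,\psi\circ\gamma_i^{-1},\ c_i>0,\ \gamma_i\in\Gamma,\ n\in\mathbb N\Big\}$$ and $L_\psi(\zeta)=(\zeta:\psi)/(\chi:\psi)$. If $\eta>0$ and $\xi,\xi'\in C_c(X)_{\ge0}$ satisfy $\xi+\xi'=\chi$, then there is $\delta>0$ such that for every $\psi\in C_c(X)_{>0}$ with $\mathrm{diam}(\mathrm{supp}\,\psi)<\delta$ and every $\zeta\in C_c(X_0)_{\ge0}$ we have $$L_\psi(\xi\zeta)+L_\psi(\xi'\zeta)\le(1+2\eta)L_\psi(\zeta).$$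
   Context: A local homeomorphism of $X$ is a homeomorphism $\gamma$ from an open subset $\mathrm{Dom}(\gamma)$ onto an open subset $\mathrm{Range}(\gamma)$. A pseudo*group is a set $\Gamma$ of local homeomorphisms such that: (1) if $\gamma\in\Gamma$ and $U\subset\mathrm{Dom}(\gamma)$ is open then $\gamma|_U\in\Gamma$; (2) the identity of $X$ is in $\Gamma$; (3) if $\gamma,\gamma'\in\Gamma$ and $\mathrm{Dom}(\gamma')=\mathrm{Range}(\gamma)$ then $\gamma'\circ\gamma\in\Gamma$; (4) if $\gamma\in\Gamma$ then $\gamma^{-1}\in\Gamma$. Minimal: every orbit $\{\gamma x\mid\gamma\in\Gamma,x\in\mathrm{Dom}(\gamma)\}$ is dense. Equicontinuous: for every $\epsilon>0$ there is $\delta(\epsilon)>0$ with $d(\gamma x,\gamma x')\le\epsilon$ whenever $\gamma\in\Gamma$, $x,x'\in\mathrm{Dom}(\gamma)$, $d(x,x')<\delta(\epsilon)$. $C_c(X)$ is the space of real continuous compactly supported functions on $X$; $C_c(X)_{\ge0}=\{\zeta\in C_c(X)\mid\zeta\ge0\}$; $C_c(X)_{>0}=\{\zeta\in C_c(X)_{\ge0}\mid\zeta(x)>0$ for some $x\}$; $C_c(X_0)_{\ge0}$ denotes the nonnegative continuous functions with compact support contained in $X_0$ (viewed as functions on $X$ vanishing outside $X_0$). For $\psi\in C_c(X)$ and $\gamma\in\Gamma$, $\psi\circ\gamma^{-1}$ denotes the function on $X$ equal to $\psi(\gamma^{-1}x)$ on $\mathrm{Range}(\gamma)$ and $0$ outside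 $\mathrm{Range}(\gamma)$. *)

(* Defs.v *)
From HB Require Import structures.
From mathcomp Require Import all_boot all_order all_algebra.
From mathcomp Require Import all_classical all_reals all_analysis.
Set Implicit Arguments. Unset Strict Implicit. Unset Printing Implicit Defensive.
Import Order.TTheory GRing.Theory Num.Theory.
Import numFieldTopology.Exports.
Local Open Scope classical_set_scope.
Local Open Scope ring_scope.

(* A local homeomorphism of X: a homeomorphism from the open set lh_dom onto
   the open set lh_fun @` lh_dom, represented by a total function lh_fun
   (only its values on lh_dom matter) together with its inverse lh_inv
   (only its values on the range matter). *)
Record lhomeo (X : topologicalType) := LHomeo {
  lh_dom : set X;
  lh_fun : X -> X;
  lh_inv : X -> X;
  lh_dom_open : open lh_dom;
  lh_range_open : open (lh_fun @` lh_dom);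
  lh_invK : forall x, lh_dom x -> lh_inv (lh_fun x) = x;
  lh_fun_cont : {within lh_dom, continuous lh_fun};
  lh_inv_cont : {within lh_fun @` lh_dom, continuous lh_inv}
}.

Definition lh_range (X : topologicalType) (g : lhomeo X) : set X :=
  lh_fun g @` lh_dom g.

(* Pseudo*group axioms (1)-(4); a local homeomorphism is determined by its
   domain and its values on it, so membership is stated up to that. *)
Definition pseudo_star_group (X : topologicalType) (G : set (lhomeo X)) : Prop :=
  [/\ (forall g U, G g -> open U -> U `<=` lh_dom g ->
         exists2 h, G h & lh_dom h = U /\ forall x, U x -> lh_fun h x = lh_fun g x),
      (exists2 h, G h & lh_dom h = setT /\ forall x, lh_fun h x = x),
      (forall g g', G g -> G g' -> lh_dom g' = lh_range g ->
         exists2 h, G h & lh_dom h = lh_dom g /\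
           forall x, lh_dom g x -> lh_fun h x = lh_fun g' (lh_fun g x))
    & (forall g, G g ->
         exists2 h, G h & lh_dom h = lh_range g /\
           forall y, lh_range g y -> lh_fun h y = lh_inv g y)].

Definition orbit (X : topologicalType) (G : set (lhomeo X)) (x : X) : set X :=
  [set y | exists2 g, G g & lh_dom g x /\ y = lh_fun g x].

Definition minimal_pg (X : topologicalType) (G : set (lhomeo X)) : Prop :=
  forall x, dense (orbit G x).

Definition equicontinuous_pg (R : realType) (X : metricType R)
    (G : set (lhomeo X)) : Prop :=
  forall eps : R, 0 < eps -> exists2 del : R, 0 < del &
    forall g x x', G g -> lh_dom g x -> lh_dom g x' -> mdist x x' < del ->
      mdist (lh_fun g x) (lh_fun g x') <= eps.

Definition locally_compact_space (X : topologicalType) : Prop :=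
  forall x : X, exists2 U, nbhs x U & compact U.

Definition supp (R : realType) (X : topologicalType) (f : X -> R) : set X :=
  closure [set x | f x != 0].

Definition Cc (R : realType) (X : topologicalType) (f : X -> R) : Prop :=
  continuous f /\ compact (supp f).
Definition Cc_nonneg (R : realType) (X : topologicalType) (f : X -> R) : Prop :=
  Cc f /\ forall x, 0 <= f x.
Definition Cc_pos (R : realType) (X : topologicalType) (f : X -> R) : Prop :=
  Cc_nonneg f /\ exists x, 0 < f x.
Definition Cc_nonneg_in (R : realType) (X : topologicalType) (X0 : set X)
    (f : X -> R) : Prop :=
  Cc_nonneg f /\ supp f `<=` X0.

(* psi o g^{-1}, extended by 0 outside Range(g) *)
Definition comp_inv (R : realType) (X : topologicalType) (psi : X -> R)
    (g : lhomeo X) : X -> R :=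
  fun y => if `[< lh_range g y >] then psi (lh_inv g y) else 0.

Definition covering_number (R : realType) (X : topologicalType)
    (G : set (lhomeo X)) (zeta psi : X -> R) : R :=
  inf [set s : R | exists (n : nat) (c : nat -> R) (g : nat -> lhomeo X),
         [/\ forall i, (i < n)%N -> 0 < c i,
             forall i, (i < n)%N -> G (g i),
             forall x, zeta x <= \sum_(i < n) c i * comp_inv psi (g i) x
           & s = \sum_(i < n) c i]].

Definition L_psi (R : realType) (X : topologicalType) (G : set (lhomeo X))
    (chi psi zeta : X -> R) : R :=
  covering_number G zeta psi / covering_number G chi psi.

Definition diam (R : realType) (X : metricType R) (A : set X) : R :=
  sup [set d : R | exists x y, [/\ A x, A y & d = mdist x y]].

(* Main.v *)
Require Import Defs.
From HB Require Import structures.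
From mathcomp Require Import all_boot all_order all_algebra.
From mathcomp Require Import all_classical all_reals all_analysis.
From mathcomp Require Import ring lra.
Import Order.TTheory GRing.Theory Num.Theory.
Import numFieldTopology.Exports.
Local Open Scope classical_set_scope.
Local Open Scope ring_scope.

Lemma cont_compact_ub (R : realType) (X : topologicalType) (f : X -> R) (K : set X) :
  continuous f -> compact K -> exists M, forall x, K x -> `|f x| <= M.
Proof.
move=> cf cK.
have cfK : compact (f @` K).
  apply: continuous_compact => //; exact: continuous_subspaceT.
have [M [Mr HM]] := compact_bounded cfK.
exists (M + 1) => x Kx.
have := HM (M + 1); rewrite ltrDl ltr01 => /(_ isT).
by move/(_ (f x)); apply; exists x.
Qed.

Lemma mdist_cont (R : realType) (X : metricType R) (x0 : X) :
  continuous (fun y : X => mdist x0 y).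
Proof.
move=> x; apply/cvgrPdist_lt => e e0.
have : nbhs x (ball x e) by exact: nbhsx_ballx.
apply: filterS => y; rewrite ballEmdist /= => hxy.
have t1 := metric_triangle x0 x y.
have t2 := metric_triangle x0 y x.
rewrite (metric_sym y x) in t2.
rewrite ltr_distlC; apply/andP; split.
  by rewrite ltrBlDr; apply: (le_lt_trans t2); rewrite ltrD2l.
by apply: (le_lt_trans t1); rewrite ltrD2l.
Qed.

Lemma unif_near (R : realType) (X : metricType R) (f : X -> R) (K : set X) (e : R) :
  continuous f -> compact K -> 0 < e ->
  exists2 d : R, 0 < d & forall y x, K y -> mdist y x < d -> f x <= f y + e.
Proof.
move=> cf cK e0.
pose P := fun (d : R) (y : X) => forall x, mdist y x < d -> f x <= f y + e.
have H : \forall d \near (0:R)^'+, K `<=` P d.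
  apply: (proj1 (compact_near_coveringP K) cK) => y Ky.
  have e20 : 0 < e / 2 by rewrite divr_gt0.
  have /cvgrPdist_lt /(_ _ e20) := cf y.
  rewrite -metricType_numDomainType.nbhs_nbhs_mdist.
  case=> r /= r0 Hr.
  exists (ball y (r/2), [set d : R | 0 < d < r / 2]) => /=.
    split; first by apply: nbhsx_ballx; rewrite divr_gt0.
    near=> d; apply/andP; split; near: d; first exact: nbhs_right_gt.
    by apply: nbhs_right_lt; rewrite divr_gt0.
  case=> y' d [/= yy' /andP[d0 dr]] x y'x.
  rewrite ballEmdist /= in yy'.
  have h1 : mdist y y' < r by apply: (lt_trans yy'); rewrite ltr_pdivrMr // ltr_pMr // ltr1n.
  have h2 : mdist y x < r.
    apply: (le_lt_trans (metric_triangle y y' x)).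
    rewrite (splitr r); apply: ltrD => //; exact: lt_trans dr.
  have := Hr y' h1; have := Hr x h2.
  rewrite !ltr_distlC => /andP[a1 a2] /andP[b1 b2].
  lra.
have [d [d0 Hd]] : exists d, 0 < d /\ K `<=` P d.
  near (0:R)^'+ => d; exists d; split; near: d; [exact: nbhs_right_gt| exact: H].
by exists d => // y x /Hd; apply.
Unshelve. all: by end_near.
Qed.


Section CN.
Variables (R : realType) (X : topologicalType) (G : set (lhomeo X)).

Definition is_cover (z p : X -> R) n (c : nat -> R) (g : nat -> lhomeo X) :=
  [/\ forall i, (i < n)%N -> 0 < c i,
      forall i, (i < n)%N -> G (g i)
    & forall x, z x <= \sum_(i < n) c i * comp_inv p (g i) x].

Lemma cover_sum_ge0 n (c : nat -> R) : (forall i, (i < n)%N -> 0 < c i) ->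
  0 <= \sum_(i < n) c i.
Proof. by move=> cp; apply: sumr_ge0 => i _; apply/ltW/cp. Qed.

Lemma cn_le z p n c g : is_cover z p n c g ->
  covering_number G z p <= \sum_(i < n) c i.
Proof.
move=> [cp gG cov]; apply: ge_inf.
  exists 0 => s [m [c' [g' [cp' _ _ ->]]]]; exact: cover_sum_ge0.
by exists n, c, g; split.
Qed.

Lemma cn_ge0 (z p : X -> R) : 0 <= covering_number G z p.
Proof.
rewrite /covering_number.
set S := [set s | _].
have [->|ne] := eqVneq S set0; first by rewrite inf0.
apply: lb_le_inf; first exact/set0P.
by move=> s [m [c' [g' [cp' _ _ ->]]]]; exact: cover_sum_ge0.
Qed.

Lemma cn_lb (z p : X -> R) (B : R) : (exists n c g, is_cover z p n c g) ->
  (forall n c g, is_cover z p n c g -> B <= \sum_(i < n) c i) ->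
  B <= covering_number G z p.
Proof.
move=> [n [c [g cv]]] H; apply: lb_le_inf.
  by exists (\sum_(i < n) c i); exists n, c, g; case: cv; split.
by move=> s [m [c' [g' [cp' gG cov ->]]]]; apply: (H m c' g'); split.
Qed.

Lemma cn_empty (z p : X -> R) : (forall n c g, ~ is_cover z p n c g) ->
  covering_number G z p = 0.
Proof.
move=> H; rewrite /covering_number.
set S := [set s | _].
suff -> : S = set0 by rewrite inf0.
apply/seteqP; split => // s [m [c' [g' [cp' gG cov _]]]].
by apply: (H m c' g'); split.
Qed.

End CN.
Arguments is_cover {R X} G z p n c g.
Arguments cn_lb {R X G} z p B.
Arguments cn_empty {R X G} z p.
Arguments cn_ge0 {R X G} z p.

Lemma comp_inv_ge0 (R : realType) (X : topologicalType) (psi : X -> R) g x :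
  (forall y, 0 <= psi y) -> 0 <= comp_inv psi g x.
Proof. by move=> p0; rewrite /comp_inv; case: ifP. Qed.

Theorem lemma1 (R : realType) (X : metricType R) (G : set (lhomeo X))
    (X0 : set X) (chi : X -> R) (eta : R) (xi xi' : X -> R) :
  locally_compact_space X ->
  pseudo_star_group G -> minimal_pg G -> equicontinuous_pg G ->
  open X0 -> compact (closure X0) ->
  Cc_pos chi -> (forall x, X0 x -> chi x = 1) ->
  0 < eta -> Cc_nonneg xi -> Cc_nonneg xi' ->
  (forall x, xi x + xi' x = chi x) ->
  exists2 del : R, 0 < del &
    forall psi : X -> R, Cc_pos psi -> diam (supp psi) < del ->
    forall zeta : X -> R, Cc_nonneg_in X0 zeta ->
      L_psi G chi psi (fun x => xi x * zeta x)
      + L_psi G chi psi (fun x => xi' x * zeta x)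
      <= (1 + 2 * eta) * L_psi G chi psi zeta.
Proof.
move=> _ _ _ eqc _ cX0 [[[cchi _] chi0] [x0 _]] chi1 eta0 [[cxi _] xi0]
  [[cxi' _] xi0'] hsum.
have [d1 d10 Hd1] := @unif_near _ _ xi _ _ cxi cX0 eta0.
have [d2 d20 Hd2] := @unif_near _ _ xi' _ _ cxi' cX0 eta0.
pose dd := Num.min d1 d2.
have dd0 : 0 < dd by rewrite lt_min d10 d20.
have [del del0 Hdel] := eqc (dd / 2) (divr_gt0 dd0 (ltr0Sn _ 1)).
exists del => // psi [[[cpsi cpsupp] psi0] _] hdiam zeta [[[czeta czsupp] zeta0] zX0].
have KF : forall g, G g -> forall x y, 0 < comp_inv psi g x ->
    0 < comp_inv psi g y -> mdist y x < dd.
  move=> g Gg x y; rewrite /comp_inv.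
  case: asboolP => [[p dp <-]|]; last by rewrite ltxx.
  case: asboolP => [[q dq <-]|]; last by rewrite ltxx.
  rewrite !lh_invK // => pp pq.
  have spp : supp psi p by apply: subset_closure; rewrite /= gt_eqF.
  have spq : supp psi q by apply: subset_closure; rewrite /= gt_eqF.
  have [M HM] := @cont_compact_ub _ _ _ _ (@mdist_cont _ _ p) cpsupp.
  have hqp : mdist q p <= diam (supp psi).
    apply: ub_le_sup; last by exists q, p.
    exists (M + M) => _ [a [b [sa sb ->]]].
    apply: (le_trans (metric_triangle a p b)); rewrite metric_sym.
    apply: lerD; [exact: le_trans (ler_norm _) (HM a sa)|exact: le_trans (ler_norm _) (HM b sb)].
  have := Hdel g q p Gg dq dp (le_lt_trans hqp hdiam).
  move=> h; apply: (le_lt_trans h); rewrite ltr_pdivrMr // ltr_pMr // ltr1n //.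
have zsupp : forall x, zeta x != 0 -> X0 x.
  by move=> x zx; apply: zX0; apply: subset_closure.
pose S (g : lhomeo X) := [set y | 0 < zeta y /\ 0 < comp_inv psi g y].
pose sel (h : X -> R) g := if `[< S g !=set0 >] then h (xget x0 (S g)) else 0.
have sel0 : forall h g, (forall x, 0 <= h x) -> 0 <= sel h g.
  by move=> h g h0; rewrite /sel; case: asboolP.
have gen : forall (h : X -> R) (d : R), (forall x, 0 <= h x) -> dd <= d ->
   (forall y x, closure X0 y -> mdist y x < d -> h x <= h y + eta) ->
   forall n c g, is_cover G zeta psi n c g ->
   covering_number G (fun x => h x * zeta x) psi <=
     \sum_(i < n) c i * (sel h (g i) + eta).
  move=> h d h0 ddd Hd n c g [cp gG cov].
  have pos : forall i, (i < n)%N -> 0 < c i * (sel h (g i) + eta).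
    move=> i lt; apply: mulr_gt0; first exact: cp.
    by have := sel0 h (g i) h0; lra.
  apply: (@cn_le _ _ G _ _ n (fun i => c i * (sel h (g i) + eta)) g); split => //.
  move=> x /=; have [zx|zx] := ltP 0 (zeta x).
    apply: (le_trans (ler_wpM2l (h0 x) (cov x))).
    rewrite mulr_sumr; apply: ler_sum => i _.
    set ph := comp_inv psi (g i) x.
    have ph0 : 0 <= ph by apply: comp_inv_ge0.
    have [php|phn] := ltP 0 ph; last first.
      have -> : ph = 0 by apply/eqP; rewrite eq_le phn ph0.
      by rewrite !mulr0.
    have Sx : S (g i) x by split.
    have ne : S (g i) !=set0 by exists x.
    rewrite /sel asboolT //.
    case: xgetP => [y _ [zy py]|/(_ x Sx)//].
    have Ky : closure X0 y by apply: subset_closure; apply: zsupp; rewrite gt_eqF.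
    have hle := Hd y x Ky (lt_le_trans (KF _ (gG i (ltn_ord i)) x y php py) ddd).
    rewrite -mulrA mulrCA; apply: ler_wpM2l; first exact/ltW/cp.
    exact: ler_wpM2r.
  have -> : zeta x = 0 by apply/eqP; rewrite eq_le zx zeta0.
  rewrite mulr0; apply: sumr_ge0 => i _; apply: mulr_ge0.
    exact/ltW/pos.
  exact: comp_inv_ge0.
have Hmain : forall n c g, is_cover G zeta psi n c g ->
    covering_number G (fun x => xi x * zeta x) psi +
    covering_number G (fun x => xi' x * zeta x) psi <= (1 + 2 * eta) * \sum_(i < n) c i.
  move=> n c g cv.
  have a := gen xi d1 xi0 (ltac:(by rewrite /dd ge_min lexx)) Hd1 n c g cv.
  have b := gen xi' d2 xi0' (ltac:(by rewrite /dd ge_min lexx orbT)) Hd2 n c g cv.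
  apply: (le_trans (lerD a b)).
  rewrite -big_split /= mulr_sumr; apply: ler_sum => i _.
  case: cv => cp _ _.
  rewrite -mulrDr [_ * c i]mulrC; apply: ler_wpM2l; first exact/ltW/cp.
  rewrite /sel; case: asboolP => [ne|_]; last lra.
  case: xgetP => [y _ [zy _]|hn]; last by case: ne => z /hn.
  have e1 := hsum y; rewrite chi1 in e1; last by apply: zsupp; rewrite gt_eqF.
  lra.
have [[n [c [g cv]]]|nocov] := pselect (exists n c g, is_cover G zeta psi n c g).
  have key : covering_number G (fun x => xi x * zeta x) psi +
    covering_number G (fun x => xi' x * zeta x) psi <=
    (1 + 2 * eta) * covering_number G zeta psi.
    rewrite -ler_pdivrMl; last lra.
    apply: cn_lb; first by exists n, c, g.
    move=> m c' g' cv'; rewrite ler_pdivrMl; last lra.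
    exact: (Hmain m c' g' cv').
  rewrite /L_psi -mulrDl mulrA; apply: ler_wpM2r key.
  by rewrite invr_ge0; exact: cn_ge0.
rewrite /L_psi; have -> : covering_number G chi psi = 0.
  apply: cn_empty => n c g [cp gG cov]; apply: nocov.
  have [M HM] := @cont_compact_ub _ _ _ _ czeta czsupp.
  have nM := normr_ge0 M.
  exists n, (fun i => (`|M| + 1) * c i), g; split => //.
    by move=> i lt; apply: mulr_gt0; [lra|exact: cp].
  move=> x.
  under eq_bigr do rewrite -mulrA.
  rewrite -mulr_sumr.
  apply: (le_trans _ (ler_wpM2l _ (cov x))); last lra.
  have [z0|znz] := eqVneq (zeta x) 0.
    by rewrite z0; apply: mulr_ge0; [lra|exact: chi0].
  rewrite chi1; last exact: zsupp.
  have h1 := le_trans (ler_norm _) (HM x (@subset_closure _ [set x | zeta x != 0] x znz)).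
  have h2 := ler_norm M.
  lra.
by rewrite !invr0 !mulr0 addr0.
Qed.
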